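(* Let $(X,G)$ be topologically transitive, let $X_0$ be a dense $G$-invariant subset of $X_t$, and let $\lambda$ be a $G$-invariant Borel probability measure on $X$ with $\lambda(X_0)=1$ ($X_0$ assumed $\lambda$-measurable). Then $S^{eq}_0\subseteq\bigcap_{N\in\mathcal N}K_0(N)$.
   Context: $G$ is a group acting by homeomorphisms $x\mapsto gx$ on a compact metrizable space $X$, topologically transitive; $X_t:=\{x\in X:\overline{Gx}=X\}$. $\mathcal N$ is the family of all closed $G$-invariant (for the diagonal action) subsets of $X^2$; for $N\in\mathcal N$, $N_x:=\{y:(x,y)\in N\}$ and $d_N(x,x'):=\lambda(N_x\triangle N_{x'})$; $K_0(N):=\{(x,x')\in X_0^2:d_N(x,x')=0\}$. For a continuous $G$-equivariant map $\pi:X_0\to Y$ into a compact metrizable minimal equicontinuous system $(Y,G)$, $S^\pi_0:=\{(x,x')\in X_0^2:\pi(x)=\pi(x')\}$, and $S^{eq}_0:=\bigcap_\pi S^\pi_0$ over all such $Y,\pi$. *)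

(* Defs.v *)
From HB Require Import structures.
From mathcomp Require Import ssreflect ssrfun ssrbool eqtype choice monoid.
From mathcomp Require Import ssralg ssrnum boolp classical_sets reals ereal topology normedtype.
From mathcomp Require Import measure.

Set Implicit Arguments.
Unset Strict Implicit.
Unset Printing Implicit Defensive.

Local Open Scope classical_set_scope.
Local Open Scope ring_scope.

(* An action of the (abstract, possibly infinite) group G on T by homeomorphisms:
   a 1 = id, a (g*h) = a g \o a h, each a g continuous (its inverse a g^-1 is then
   also continuous, so each a g is a homeomorphism). *)
Definition homeo_action (G : groupType) (T : topologicalType) (a : G -> T -> T) :=
  [/\ (forall x, a (@monoid.one G) x = x),
      (forall g h x, a (monoid.mul g h) x = a g (a h x)) &
      (forall g, continuous (a g))].

Definition orbit (G : groupType) (T : Type) (a : G -> T -> T) (x : T) : set T :=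
  [set a g x | g in [set: G]].

Definition top_transitive (G : groupType) (T : topologicalType) (a : G -> T -> T) :=
  forall U V : set T, open U -> open V -> U !=set0 -> V !=set0 ->
    exists g : G, (a g @` U) `&` V !=set0.

Definition transitive_points (G : groupType) (T : topologicalType) (a : G -> T -> T)
  : set T := [set x | closure (orbit a x) = [set: T]].

Definition G_invariant_set (G : groupType) (T : Type) (a : G -> T -> T) (A : set T) :=
  forall g x, A x -> A (a g x).

Definition minimal_system (G : groupType) (T : topologicalType) (a : G -> T -> T) :=
  forall y : T, closure (orbit a y) = [set: T].

Definition equicontinuous_system (R : realType) (G : groupType)
  (Y : pseudoMetricType R) (b : G -> Y -> Y) :=
  forall eps : R, 0 < eps -> exists2 del : R, 0 < del &
    forall (g : G) (y y' : Y), ball y del y' -> ball (b g y) eps (b g y').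

Definition borel_type (T : ptopologicalType) := g_sigma_algebraType (@open T).

Definition in_calN (G : groupType) (X : topologicalType) (a : G -> X -> X)
  (N : set (X * X)) :=
  closed N /\ forall g x y, N (x, y) -> N (a g x, a g y).

Definition section (X : Type) (N : set (X * X)) (x : X) : set X := [set y | N (x, y)].

Definition symdiff (T : Type) (A B : set T) : set T := (A `\` B) `|` (B `\` A).

Definition d_N (R : realType) (X : ptopologicalType)
  (lam : set (borel_type X) -> \bar R) (N : set (X * X)) (x x' : X) : \bar R :=
  lam (symdiff (section N x) (section N x')).

Definition K0 (R : realType) (X : ptopologicalType)
  (lam : set (borel_type X) -> \bar R) (X0 : set X) (N : set (X * X)) : set (X * X) :=
  [set p | X0 p.1 /\ X0 p.2 /\ d_N lam N p.1 p.2 = 0%:E].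

(* S^π_0 : here π is given as a total function X -> Y, of which only the
   restriction to X0 matters (continuity and equivariance are only required on X0) *)
Definition S0pi (X Y : Type) (X0 : set X) (pi : X -> Y) : set (X * X) :=
  [set p | X0 p.1 /\ X0 p.2 /\ pi p.1 = pi p.2].

Definition S0eq (R : realType) (G : groupType) (X : topologicalType)
  (a : G -> X -> X) (X0 : set X) : set (X * X) :=
  [set p | X0 p.1 /\ X0 p.2 /\
    forall (Y : pseudoMetricType R) (b : G -> Y -> Y) (pi : X -> Y),
      hausdorff_space Y -> compact [set: Y] ->
      homeo_action b -> minimal_system b -> equicontinuous_system b ->
      {within X0, continuous pi} ->
      (forall g x, X0 x -> pi (a g x) = b g (pi x)) ->
      S0pi X0 pi p].

(* Main.v *)
Require Import Defs.
From HB Require Import structures.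
From mathcomp Require Import all_ssreflect ssralg ssrnum archimedean monoid.
From mathcomp Require Import boolp classical_sets reals ereal topology normedtype sequences.
From mathcomp Require Import measure lra.
Import Order.TTheory GRing.Theory Num.Theory archimedean.Num.Theory.
Import numFieldNormedType.Exports.
Local Open Scope classical_set_scope.
Local Open Scope ring_scope.
Section Fspace.
Variables (R : realType) (G : groupType) (X : pseudoPMetricType R)
  (al : G -> X -> X) (X0 : set X) (rho : X -> X -> R).

Definition Pfun (f : X -> R) :=
  (forall y, ~ X0 y -> f y = 0) /\
  forall e, 0 < e -> exists2 x, X0 x & forall y, X0 y -> `|f y - rho x y| <= e.

Definition Yt := {f : X -> R | Pfun f}.
HB.instance Definition _ := gen_eqMixin Yt.
HB.instance Definition _ := gen_choiceMixin Yt.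

Definition yball (f : Yt) (e : R) (g : Yt) :=
  exists2 d, d < e & forall y, `|sval f y - sval g y| <= d.

Lemma yball_center f e : 0 < e -> yball f e f.
Proof. by move=> e0; exists 0 => // y; rewrite subrr normr0. Qed.

Lemma yball_sym f g e : yball f e g -> yball g e f.
Proof. by move=> [d de h]; exists d => // y; rewrite distrC. Qed.

Lemma yball_triangle f g h e1 e2 : yball f e1 g -> yball g e2 h -> yball f (e1 + e2) h.
Proof.
move=> [d1 d1e h1] [d2 d2e h2]; exists (d1 + d2); first exact: ltrD.
move=> y; apply: le_trans (ler_distD (sval g y) _ _) _.
exact: lerD.
Qed.

Definition yent : set_system (Yt * Yt) := entourage_ yball.
Definition ynbhs (f : Yt) : set_system Yt := nbhs_ yent f.
HB.instance Definition _ := hasNbhs.Build Yt ynbhs.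
HB.instance Definition _ := @Nbhs_isPseudoMetric.Build R Yt
  yent erefl yball yball_center yball_sym yball_triangle erefl.

Lemma Yext (f g : Yt) : (forall y, sval f y = sval g y) -> f = g.
Proof.
case: f g => f Pf [g Pg] /= /funext h; subst g.
by congr exist; apply: Prop_irrelevance.
Qed.

Lemma Y_hausdorff : hausdorff_space Yt.
Proof.
move=> p q pq; apply: contrapT => npq.
have [y hy] : exists y, sval p y <> sval q y.
  apply: contrapT => hn; apply: npq; apply: Yext => y.
  by apply: contrapT => h; apply: hn; exists y.
have d0 : 0 < `|sval p y - sval q y| / 2.
  by rewrite divr_gt0 // normr_gt0 subr_eq0; apply/eqP.
have := pq (ball p _) (ball q _) (nbhsx_ballx p _ d0) (nbhsx_ballx q _ d0).
move=> [z [[d1 d1e h1] [d2 d2e h2]]].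
have e1 := ler_distD (sval z y) (sval p y) (sval q y).
have e2 := h1 y; have e3 := h2 y; rewrite distrC in e3.
move: e1 e2 e3 d1e d2e; move: (`|sval p y - sval q y|) => t.
move: (`|sval p y - sval z y|) (`|sval z y - sval q y|) => u v; lra.
Qed.

Hypothesis rho_ge0 : forall x y, 0 <= rho x y.
Hypothesis rhoxx : forall x, rho x x = 0.
Hypothesis rhoC : forall x y, rho x y = rho y x.
Hypothesis rho_tri : forall x y z, rho x z <= rho x y + rho y z.
Hypothesis tbdd : forall e, 0 < e -> exists s : seq X,
  (forall q, q \in s -> X0 q) /\ forall x, X0 x -> exists2 q, q \in s & rho x q <= e.

Lemma rho_lip u v y : `|rho u y - rho v y| <= rho u v.
Proof.
have h1 := rho_tri u v y; have h2 := rho_tri v u y; rewrite (rhoC v u) in h2.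
rewrite ler_norml; apply/andP; split; lra.
Qed.

Definition phi x y := if pselect (X0 y) then rho x y else 0.

Lemma phiP x : X0 x -> Pfun (phi x).
Proof.
move=> Xx; split; first by move=> y nXy; rewrite /phi; case: pselect.
move=> e e0; exists x => // y Xy; rewrite /phi; case: pselect => [Xy'|//].
by rewrite subrr normr0 ltW.
Qed.

Lemma approx (f : Yt) e : 0 < e -> exists2 q, X0 q & forall y, `|sval f y - phi q y| <= e.
Proof.
case: f => f [f0 fa] /= e0; have [q Xq hq] := fa e e0; exists q => // y.
rewrite /phi; case: pselect => Xy; first exact: hq.
by rewrite f0 // subrr normr0 ltW.
Qed.

Lemma ynet {e : R} : 0 < e -> exists s : seq X, (forall q, q \in s -> X0 q) /\
  forall f : Yt, exists2 q, q \in s & forall y, `|sval f y - phi q y| <= e.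
Proof.
move=> e0; have e20 : 0 < e / 2 by rewrite divr_gt0.
have [s [sX hs]] := tbdd _ e20; exists s; split => // -[f [f0 fa]].
have [x Xx hx] := fa _ e20; have [q qs hq] := hs x Xx.
exists q => // y /=; rewrite /phi; case: pselect => Xy; last first.
  by rewrite f0 // subrr normr0 ltW.
have := ler_distD (rho x y) (f y) (rho q y).
have := hx y Xy; have := rho_lip x q y.
move: (`|f y - rho q y|) (`|f y - rho x y|) (`|rho x y - rho q y|) => t u v; lra.
Qed.

Lemma ultra_pick (F : set_system (Yt)) (Aq : X -> set (Yt)) s :
  UltraFilter F -> F (foldr (fun q A => Aq q `|` A) set0 s) -> exists2 q, q \in s & F (Aq q).
Proof.
move=> UF; have PF := @ultra_proper _ F UF.
elim: s => [|h s ih] /=; first by move/filter_not_empty.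
move=> Fu; have [Fh|Fnh] := in_ultra_setVsetC (Aq h) UF.
  by exists h => //; rewrite inE eqxx.
have : F (foldr (fun q A => Aq q `|` A) set0 s).
  by apply: filterS (filterI Fu Fnh) => f [[]].
by move/ih => [q qs Fq]; exists q => //; rewrite inE qs orbT.
Qed.

Section Compact.
Variable F : set_system (Yt).
Hypothesis UF : UltraFilter F.
#[local] Instance PF : ProperFilter F := @ultra_proper _ F UF.

Lemma cauchyF {e : R} : 0 < e -> exists2 A, F A &
  forall f g, A f -> A g -> forall y, `|sval f y - sval g y| <= e.
Proof.
move=> e0; have e20 : 0 < e / 2 by rewrite divr_gt0.
have [s [sX hs]] := ynet e20.
pose Aq q : set (Yt) := [set f | forall y, `|sval f y - phi q y| <= e / 2].
have : F (foldr (fun q A => Aq q `|` A) set0 s).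
  apply: filterS filterT => f _; have [q qs hq] := hs f.
  elim: (s) qs => [//|h t ih] /=; rewrite inE => /orP [/eqP <-|qt]; first by left.
  by right; apply: ih.
move/(ultra_pick _ _ _ UF) => [q _ Fq]; exists (Aq q) => // f g Af Ag y.
have e1 := ler_distD (phi q y) (sval f y) (sval g y).
have e2 := Af y; have e3 := Ag y; rewrite distrC in e3.
move: e1 e2 e3.
move: (`|sval f y - sval g y|) (`|sval f y - phi q y|) (`|phi q y - sval g y|) => t u v.
lra.
Qed.

Definition ev y (f : Yt) : R := sval f y.

Lemma ev_cvg y : cvg (ev y @ F).
Proof.
apply: cauchy_cvg; apply: cauchy_exP => eps eps0.
have e20 : 0 < eps / 2 by rewrite divr_gt0.
have [A FA hA] := cauchyF e20.
have [f0 Af0] := filter_ex FA.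
exists (sval f0 y).
suff : F [set g | ball (sval f0 y) eps (ev y g)] by [].
apply: filterS FA => g Ag /=; rewrite /ball /=.
apply: le_lt_trans (hA _ _ Af0 Ag y) _; lra.
Qed.

Definition L y := lim (ev y @ F).

Lemma L_cvg y : ev y @ F --> L y.
Proof. exact: ev_cvg. Qed.

Lemma Lclose {e : R} {A} : F A -> (forall f g, A f -> A g -> forall y, `|sval f y - sval g y| <= e) ->
  forall {f}, A f -> forall y, `|sval f y - L y| <= e.
Proof.
move=> FA hA f Af y; apply/ler_addgt0Pr => eps eps0.
have Fn : \forall g \near F, `|L y - ev y g| < eps.
  exact: (cvgr_dist_lt (ev y) (L y) (L_cvg y) eps eps0).
have [g [Ag hg]] := filter_ex (filterI FA Fn).
have e1 := ler_distD (sval g y) (sval f y) (L y).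
have e2 := hA _ _ Af Ag y.
rewrite /ev distrC in hg.
move: e1 e2 hg; move: (`|sval f y - L y|) (`|sval f y - sval g y|) (`|sval g y - L y|) => t u v.
lra.
Qed.

Lemma LP : Pfun L.
Proof.
split.
  move=> y nXy; apply/normr0_eq0/eqP; rewrite eq_le normr_ge0 andbT.
  apply/ler_addgt0Pr => e e0; rewrite add0r.
  have [A FA hA] := cauchyF e0; have [f Af] := filter_ex FA.
  have := Lclose FA hA Af y; rewrite (proj1 (svalP f)) // sub0r normrN.
  done.
move=> e e0; have e20 : 0 < e / 2 by rewrite divr_gt0.
have [A FA hA] := cauchyF e20; have [f Af] := filter_ex FA.
have [x Xx hx] := (proj2 (svalP f)) _ e20.
exists x => // y Xy.
have e1 := ler_distD (sval f y) (L y) (rho x y).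
have e2 := Lclose FA hA Af y; rewrite distrC in e2.
have e3 := hx y Xy.
move: e1 e2 e3; move: (`|L y - rho x y|) (`|L y - sval f y|) (`|sval f y - rho x y|) => t u v.
lra.
Qed.

Definition Lp : Yt := exist _ L LP.

Lemma F_cvg : F --> Lp.
Proof.
apply/fcvg_ballP => e e0; have e20 : 0 < e / 2 by rewrite divr_gt0.
have [A FA hA] := cauchyF e20.
apply: filterS (FA) => f Af; exists (e / 2); first lra.
by move=> y; rewrite /= distrC; apply: (Lclose FA hA Af).
Qed.

End Compact.

Lemma Y_compact : compact [set: Yt].
Proof.
rewrite compact_ultra => F UF _; exists (Lp F UF); split => //.
exact: (F_cvg F UF).
Qed.

Hypothesis al1 : forall x, al monoid.one x = x.
Hypothesis alM : forall g h x, al (monoid.mul g h) x = al g (al h x).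
Hypothesis alc : forall g, continuous (al g).
Hypothesis X0inv : G_invariant_set al X0.
Hypothesis rho_act : forall g x y, rho (al g x) (al g y) = rho x y.
Hypothesis rho_cont : forall x (e : R), X0 x -> 0 < e ->
  exists2 r, 0 < r & forall y, X0 y -> ball x r y -> rho x y <= e.
Hypothesis orbit_near : forall x x' (r : R), X0 x -> 0 < r -> exists g, ball x' r (al g x).
Variable x0 : X.
Hypothesis X0x0 : X0 x0.

Lemma alK g x : al (monoid.inv g) (al g x) = x.
Proof. by rewrite -alM monoid.mulVg al1. Qed.
Lemma alKV g x : al g (al (monoid.inv g) x) = x.
Proof. by rewrite -alM monoid.mulgV al1. Qed.

Lemma X0back g y : X0 (al g y) -> X0 y.
Proof. by move=> h; rewrite -(alK g y); apply: X0inv. Qed.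

Definition bfun g (f : Yt) y := sval f (al (monoid.inv g) y).

Lemma bP g f : Pfun (bfun g f).
Proof.
case: f => f [f0 fa]; split => [y nXy|e e0]; rewrite /bfun /=.
  by apply: f0 => /X0back; apply: nXy.
have [x Xx hx] := fa e e0; exists (al g x); first exact: X0inv.
move=> y Xy; rewrite -[in rho _ y](alKV g y) rho_act; apply: hx.
exact: X0inv.
Qed.

Definition b g f : Yt := exist _ (bfun g f) (bP g f).

Lemma b_iso g f h e : yball f e h -> yball (b g f) e (b g h).
Proof. by move=> [d de hd]; exists d => // y; apply: hd. Qed.

Lemma b_homeo : homeo_action b.
Proof.
split.
- by move=> f; apply: Yext => y; rewrite /= /bfun monoid.invg1 al1.
- by move=> g h f; apply: Yext => y; rewrite /= /bfun monoid.invgM alM.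
- move=> g f B /nbhs_ballP [e e0 sB].
  by apply/nbhs_ballP; exists e => // h bh; apply: sB; apply: b_iso.
Qed.

Lemma b_equi : equicontinuous_system b.
Proof. by move=> e e0; exists e => // g y y'; apply: b_iso. Qed.

Lemma b_minimal : minimal_system b.
Proof.
move=> f; apply/seteqP; split => // p _ B /nbhs_ballP [e e0 sB].
have e40 : 0 < e / 4 by rewrite divr_gt0.
have [x Xx hx] := (proj2 (svalP f)) _ e40.
have [x' Xx' hx'] := (proj2 (svalP p)) _ e40.
have [r r0 hr] := rho_cont x' _ Xx' e40.
have [g bg] := orbit_near x x' _ Xx r0.
exists (b g f); split; first by exists g.
apply: sB; exists (3 * e / 4); first lra.
move=> y /=; rewrite /bfun.
have [Xy|nXy] := pselect (X0 y); last first.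
  rewrite (proj1 (svalP p)) // (proj1 (svalP f)); last by move/X0back.
  by rewrite subrr normr0; lra.
have h1 := hx' y Xy.
have h2 := hx _ (X0inv (monoid.inv g) _ Xy).
rewrite -[in rho _ (al _ y)](alK g x) rho_act in h2.
have h3 := rho_lip x' (al g x) y.
have h4 := hr _ (X0inv g _ Xx) bg.
have t1 := ler_distD (rho x' y) (sval p y) (sval f (al (monoid.inv g) y)).
have t2 := ler_distD (rho (al g x) y) (rho x' y) (sval f (al (monoid.inv g) y)).
rewrite distrC in h2.
move: h1 h2 h3 h4 t1 t2.
move: (`|sval p y - sval f (al (monoid.inv g) y)|) (`|sval p y - rho x' y|)
  (`|rho x' y - sval f (al (monoid.inv g) y)|) (`|rho x' y - rho (al g x) y|)
  (`|rho (al g x) y - sval f (al (monoid.inv g) y)|) (rho x' (al g x)) => t u v w z k.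
lra.
Qed.

Lemma phiE x y : X0 y -> phi x y = rho x y.
Proof. by rewrite /phi; case: pselect. Qed.

Definition pi x : Yt :=
  match pselect (X0 x) with
  | left h => exist _ (phi x) (phiP x h)
  | right _ => exist _ (phi x0) (phiP x0 X0x0)
  end.

Lemma piE x : X0 x -> sval (pi x) = phi x.
Proof. by move=> Xx; rewrite /pi; case: pselect. Qed.

Lemma pi_equi g x : X0 x -> pi (al g x) = b g (pi x).
Proof.
move=> Xx; apply: Yext => y; rewrite /= /bfun piE ?piE //; last exact: X0inv.
rewrite /phi; case: pselect => Xy; case: pselect => Xy' //.
- by rewrite -[in rho _ y](alKV g y) rho_act.
- by exfalso; apply: Xy'; apply: X0inv.
- by exfalso; apply: Xy; rewrite -(alKV g y); apply: X0inv.
Qed.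

Lemma pi_cont : {within X0, continuous pi}.
Proof.
apply/subspace_continuousP => x Xx B /nbhs_ballP [e e0 sB].
have e20 : 0 < e / 2 by rewrite divr_gt0.
have [r r0 hr] := rho_cont x _ Xx e20.
apply/nbhs_ballP; exists r => // z bxz Xz; apply: sB.
exists (e / 2); first lra.
move=> y; rewrite !piE //; rewrite /phi; case: pselect => Xy.
  exact: le_trans (rho_lip x z y) (hr z Xz bxz).
by rewrite subrr normr0 ltW.
Qed.

Lemma main_generic p : S0eq R al X0 p -> rho p.1 p.2 = 0.
Proof.
case=> X1 [X2 H].
have := H Yt b pi Y_hausdorff Y_compact b_homeo b_minimal b_equi pi_cont pi_equi.
case=> _ [_ e]; have := congr1 (fun f : Yt => sval f p.2) e.
by rewrite /= !piE // !phiE // rhoxx.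
Qed.

End Fspace.
Section Proof7.
Variables (R : realType) (G : groupType) (X : pseudoPMetricType R)
  (a : G -> X -> X) (X0 : set X) (lam : measure (borel_type X) R) (N : set (X * X)).
Hypothesis cptX : compact [set: X].
Hypothesis act : homeo_action a.
Hypothesis X0t : X0 `<=` transitive_points a.
Hypothesis X0d : dense X0.
Hypothesis X0inv : G_invariant_set a X0.
Hypothesis lamT : lam [set: borel_type X] = 1%E.
Hypothesis laminv : forall g (A : set (borel_type X)), measurable A -> lam (a g @^-1` A) = lam A.
Hypothesis mX0 : measurable (X0 : set (borel_type X)).
Hypothesis lamX0 : lam X0 = 1%E.
Hypothesis NN : in_calN a N.

Lemma act1 x : a monoid.one x = x. Proof. by case: act. Qed.
Lemma actM g h x : a (monoid.mul g h) x = a g (a h x). Proof. by case: act. Qed.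
Lemma actK g x : a (monoid.inv g) (a g x) = x.
Proof. by rewrite -actM monoid.mulVg act1. Qed.
Lemma actKV g x : a g (a (monoid.inv g) x) = x.
Proof. by rewrite -actM monoid.mulgV act1. Qed.
Lemma act_cont g : continuous (a g). Proof. by case: act. Qed.

Lemma Ninv g {x y} : N (x, y) -> N (a g x, a g y).
Proof. by case: NN => _; apply. Qed.
Lemma NgE g x z : N (a g x, z) <-> N (x, a (monoid.inv g) z).
Proof.
split=> h; first by have := Ninv (monoid.inv g) h; rewrite actK.
by have := Ninv g h; rewrite actKV.
Qed.

Lemma closed_meas (A : set X) : closed A -> measurable (A : set (borel_type X)).
Proof.
move=> cA; rewrite -[A]setCK; apply: measurableC.
by apply: sub_sigma_algebra; apply: closed_openC.
Qed.

Lemma open_meas (A : set X) : open A -> measurable (A : set (borel_type X)).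
Proof. by move=> oA; apply: sub_sigma_algebra. Qed.

Definition S x := section N x.

Lemma closedN : closed N. Proof. by case: NN. Qed.

Lemma closed_S x : closed (S x).
Proof.
rewrite closure_id; apply/seteqP; split; first exact: subset_closure.
move=> z zcl; rewrite /S /section /=.
have : closure N (x, z).
  move=> B /nbhs_ballP [e e0 sB].
  have [w [Sw bw]] := zcl _ (nbhsx_ballx z e e0).
  exists (x, w); split => //; apply: sB; split => //=; exact: ballxx.
by rewrite -(closure_id _).1 //; exact: closedN.
Qed.

Lemma mS x : measurable (S x : set (borel_type X)).
Proof. by apply: closed_meas; apply: closed_S. Qed.

Definition m (A : set X) : R := fine (lam A).

Lemma lam_le1 {A : set (borel_type X)} : measurable A -> (lam A <= 1)%E.
Proof. by move=> mA; rewrite -lamT le_measure ?inE. Qed.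

Lemma lamE {A : set (borel_type X)} : measurable A -> lam A = (m A)%:E.
Proof.
move=> mA; rewrite /m fineK // ge0_fin_numE ?measure_ge0 //.
by rewrite (le_lt_trans (lam_le1 mA)) // ltry.
Qed.

Lemma m_ge0 A : 0 <= m A.
Proof. by rewrite /m fine_ge0 // measure_ge0. Qed.

Lemma m_le1 {A : set (borel_type X)} : measurable A -> m A <= 1.
Proof. by move=> mA; have := lam_le1 mA; rewrite lamE // lee_fin. Qed.

Lemma m_le {A B : set (borel_type X)} : measurable A -> measurable B -> A `<=` B -> m A <= m B.
Proof.
by move=> mA mB AB; rewrite -lee_fin -!lamE // le_measure ?inE.
Qed.

Lemma m_U2 {A B : set (borel_type X)} : measurable A -> measurable B -> m (A `|` B) <= m A + m B.
Proof.
move=> mA mB; rewrite -lee_fin -!lamE ?EFinD -?lamE //; last exact: measurableU.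
exact: measureU2.
Qed.

Lemma m_add {A B : set (borel_type X)} : measurable A -> measurable B -> A `&` B = set0 ->
  m (A `|` B) = m A + m B.
Proof.
move=> mA mB AB; apply/eqP; rewrite -eqe EFinD -!lamE //; last exact: measurableU.
by rewrite measureU.
Qed.

Lemma m_inv g {A : set (borel_type X)} : measurable A -> m (a g @^-1` A) = m A.
Proof. by move=> mA; rewrite /m laminv. Qed.

Lemma m0 : m set0 = 0.
Proof. by rewrite /m measure0. Qed.

Lemma msymdiff {A B : set (borel_type X)} : measurable A -> measurable B -> measurable (symdiff A B).
Proof. by move=> mA mB; apply: measurableU; apply: measurableD. Qed.

Definition rho x y := m (symdiff (S x) (S y)).

Lemma mSd x y : measurable (symdiff (S x) (S y) : set (borel_type X)).
Proof. by apply: msymdiff; apply: mS. Qed.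

Lemma rho_ge0 x y : 0 <= rho x y. Proof. exact: m_ge0. Qed.
Lemma rho_le1 x y : rho x y <= 1. Proof. by apply: m_le1; apply: mSd. Qed.
Lemma rhoxx x : rho x x = 0.
Proof. by rewrite /rho /symdiff setDv setU0 m0. Qed.
Lemma rhoC x y : rho x y = rho y x.
Proof. by rewrite /rho /symdiff setUC. Qed.
Lemma rho_tri x y z : rho x z <= rho x y + rho y z.
Proof.
rewrite /rho; apply: le_trans (m_U2 (mSd _ _) (mSd _ _)).
apply: m_le; [exact: mSd| apply: measurableU; exact: mSd|].
move=> w [[h1 h2]|[h1 h2]].
- by have [h3|h3] := pselect (S y w); [right; left; split|left; left; split].
- by have [h3|h3] := pselect (S y w); [left; right; split|right; right; split].
Qed.

Lemma S_act g x : S (a g x) = a (monoid.inv g) @^-1` S x.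
Proof. by apply/seteqP; split => z /=; rewrite /S /section /= NgE. Qed.

Lemma rho_act g x y : rho (a g x) (a g y) = rho x y.
Proof.
rewrite /rho !S_act; rewrite -[RHS](m_inv (monoid.inv g) (mSd x y)).
by congr m.
Qed.

Lemma inv_lt {e : R} : 0 < e -> exists k : nat, k.+1%:R^-1 < e.
Proof.
move=> e0; exists (Num.truncn e^-1).
rewrite -[e in _ < e]invrK ltf_pV2 ?posrE ?invr_gt0 //.
exact: truncnS_gt.
Qed.

Lemma usc x {e : R} : 0 < e -> exists2 r, 0 < r & forall y, ball x r y -> m (S y `\` S x) <= e.
Proof.
move=> e0.
pose P (k : nat) := closure [set z | exists y, ball x (k.+1%:R^-1) y /\ N (y, z)].
pose C k := P k `\` S x.
have mC k : measurable (C k : set (borel_type X)).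
  apply: measurableD; last exact: mS.
  by apply: closed_meas; apply: closed_closure.
have Cni : nonincreasing_seq C.
  move=> i j /= ij; apply/subsetPset => z [Pz nSz]; split => //; move: Pz; apply: closureS.
  move=> w [y [b Nyw]]; exists y; split => //; move: b; apply: le_ball.
  by rewrite lef_pV2 ?posrE // ler_nat.
have C0 : \bigcap_k C k = set0.
  apply/seteqP; split => // z Cz.
  have [_ nSz] := Cz 0%N (I : setT 0%N).
  apply: nSz; rewrite /S /section /=.
  suff : closure N (x, z) by rewrite -(closure_id _).1 //; exact: closedN.
  move=> B /nbhs_ballP [d d0 sB].
  have [k kd] := inv_lt d0.
  have [Pz _] := Cz k I.
  have [w [[y [bxy Nyw]] bzw]] := Pz _ (nbhsx_ballx z d d0).
  exists (y, w); split => //; apply: sB; split => //=.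
  by move: bxy; apply: le_ball; apply: ltW.
have cv := nonincreasing_cvg_mu (R := R) (mu := lam) _ mC _ Cni.
have : (lam \o C) n @[n --> \oo] --> 0%E.
  rewrite -(measure0 lam) -C0; apply: cv.
  - by rewrite lamE ?ltry // mC.
  - by rewrite C0; exact: measurable0.
move=> /fine_cvg h; have [k0 _ hk] := cvgr0_norm_lt _ h e e0.
exists k0.+1%:R^-1; first by rewrite invr_gt0.
move=> y bxy.
have := hk k0 (leqnn k0) => /=.
have -> : fine (lam (C k0)) = m (C k0) by [].
rewrite ger0_norm ?m_ge0 // => /ltW; apply: le_trans.
apply: m_le => //; first by apply: measurableD; apply: mS.
move=> z [Syz nSxz]; split => //; apply: subset_closure; exists y; split => //.
Qed.

Definition psi x := m (S x).

Lemma psi_act g x : psi (a g x) = psi x.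
Proof. by rewrite /psi S_act m_inv //; exact: mS. Qed.

Lemma orbit_near x x' {r : R} : X0 x -> 0 < r -> exists g, ball x' r (a g x).
Proof.
move=> /X0t; rewrite /transitive_points /= => cl r0.
have : closure (Defs.orbit a x) x' by rewrite cl.
move=> /(_ _ (nbhsx_ballx x' r r0)) [z [[g _ <-] b]].
by exists g.
Qed.

Lemma psi_le x x' : X0 x -> X0 x' -> psi x <= psi x'.
Proof.
move=> Xx Xx'; apply/ler_addgt0Pr => e e0.
have [r r0 hr] := usc x' e0.
have [g bg] := orbit_near x x' Xx r0.
rewrite -(psi_act g) /psi.
apply: (le_trans (y := m ((S (a g x) `\` S x') `|` S x'))).
  apply: m_le; [exact: mS| |].
  - by apply: measurableU; [apply: measurableD|]; exact: mS.
  - by move=> z Sz; have [h|h] := pselect (S x' z); [right|left].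
have mD : measurable (S (a g x) `\` S x' : set (borel_type X)) by apply: measurableD; exact: mS.
eapply le_trans; first exact: (m_U2 mD (mS x')).
by rewrite addrC lerD2l; apply: hr.
Qed.

Lemma psi_eq x x' : X0 x -> X0 x' -> psi x = psi x'.
Proof. by move=> Xx Xx'; apply/le_anti; rewrite !psi_le. Qed.

Lemma mDI {A B : set (borel_type X)} : measurable A -> measurable B ->
  m A = m (A `\` B) + m (A `&` B).
Proof.
move=> mA mB; rewrite -m_add.
- congr m; apply/seteqP; split => [z Az|z [[]|[]]] //.
  by have [h|h] := pselect (B z); [right|left].
- exact: measurableD.
- exact: measurableI.
- by rewrite setDE setIACA setICl setI0.
Qed.

Lemma rho_split x y : rho x y = m (S x `\` S y) + m (S y `\` S x).
Proof.
rewrite /rho /symdiff m_add //; try by apply: measurableD; exact: mS.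
by apply/seteqP; split => // z [[? ?] [? ?]].
Qed.

Lemma rho_two x y : X0 x -> X0 y -> rho x y = 2 * m (S y `\` S x).
Proof.
move=> Xx Xy; rewrite rho_split.
have h1 := mDI (mS x) (mS y); have h2 := mDI (mS y) (mS x).
have := psi_eq _ _ Xx Xy; rewrite /psi h1 h2 setIC => h.
have -> : m (S x `\` S y) = m (S y `\` S x) by lra.
by rewrite mulr2n mulrDl mul1r.
Qed.

Lemma rho_cont x {e : R} : X0 x -> 0 < e ->
  exists2 r, 0 < r & forall y, X0 y -> ball x r y -> rho x y <= e.
Proof.
move=> Xx e0; have e20 : 0 < e / 2 by rewrite divr_gt0.
have [r r0 hr] := usc x e20.
exists r => // y Xy bxy; rewrite rho_two //.
have := hr y bxy; lra.
Qed.

Definition Bo (x : X) (r : R) : set X := (ball x r)°.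

Lemma Bo_open x r : open (Bo x r).
Proof. exact: open_interior. Qed.

Lemma Bo_ball x r : Bo x r `<=` ball x r.
Proof. exact: interior_subset. Qed.

Lemma ball_Bo x r : 0 < r -> ball x (r / 2) `<=` Bo x r.
Proof.
move=> r0 y bxy; rewrite /Bo /interior /=; apply/nbhs_ballP.
exists (r / 2); first by rewrite /= divr_gt0.
by move=> z byz; apply: ball_split bxy byz.
Qed.

Lemma mBo x r : measurable (Bo x r : set (borel_type X)).
Proof. by apply: open_meas; apply: Bo_open. Qed.

Lemma supp_point : exists2 x0, X0 x0 & forall r, 0 < r -> 0 < m (Bo x0 r).
Proof.
have cov n : exists s : seq X, forall z, exists2 q, q \in s & Bo q (n.+1%:R^-1) z.
  have := cptX; rewrite compact_cover => /(_ X setT (fun q => Bo q (n.+1%:R^-1))).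
  case.
  - by move=> i _; apply: Bo_open.
  - move=> z _; exists z => //; apply: ball_Bo; first by rewrite invr_gt0.
    by apply: ballxx; rewrite divr_gt0 // invr_gt0.
  move=> D' _ hD; exists (finmap.enum_fset D') => z; have [q Dq Bq] := hD z I.
  by exists q.
have [Ds hDs] := choice cov.
pose E n k : set X :=
  if (k < size (Ds n))%N && (m (Bo (nth point (Ds n) k) (n.+1%:R^-1)) == 0)
  then Bo (nth point (Ds n) k) (n.+1%:R^-1) else set0.
pose Z := \bigcup_n \bigcup_k E n k.
have nZ : negligible lam (Z : set (borel_type X)).
  apply: negligible_bigcup => n; apply: negligible_bigcup => k.
  rewrite /E; case: ifP => [/andP [_ /eqP h]|_]; last exact: negligible_set0.
  apply/(negligibleP _ (mBo _ _)).
  by apply: etrans (lamE (mBo _ _)) _; rewrite h.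
have [x0 [Xx0 nZx0]] : exists x0, X0 x0 /\ ~ Z x0.
  apply: contrapT => hn.
  have : negligible lam (X0 : set (borel_type X)).
    apply: negligibleS nZ => z Xz; apply: contrapT => nz; apply: hn.
    by exists z.
  move=> /(negligibleP _ mX0) h; have := etrans (esym lamX0) h.
  by move/eqP; rewrite eqe oner_eq0.
exists x0 => // r r0.
have r40 : 0 < r / 4 by rewrite divr_gt0.
have [n hn] := inv_lt r40.
have [q qin Bq] := hDs n x0.
have sub : Bo q (n.+1%:R^-1) `<=` Bo x0 r.
  move=> y /Bo_ball bqy; apply: ball_Bo => //.
  have := ball_triangle (ball_sym (Bo_ball _ _ _ Bq)) bqy.
  apply: le_ball; move: hn; move: (n.+1%:R^-1 : R) => t; lra.
rewrite lt_neqAle m_ge0 andbT; apply/negP => /eqP h0.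
apply: nZx0; exists n => //.
exists (index q (Ds n)) => //.
rewrite /E nth_index // index_mem qin /=.
have : m (Bo q (n.+1%:R^-1)) <= 0.
  by rewrite h0; apply: m_le => //; exact: mBo.
rewrite le_eqVlt ltNge m_ge0 orbF => ->.
done.
Qed.

Lemma tot_bdd (e : R) : 0 < e -> exists s : seq X,
  (forall q, q \in s -> X0 q) /\ forall x, X0 x -> exists2 q, q \in s & rho x q <= e.
Proof.
move=> e0; have e30 : 0 < e / 3 by rewrite divr_gt0.
have [x0 Xx0 hx0] := supp_point.
have [r r0 hr] := rho_cont x0 Xx0 e30.
pose U := Bo x0 r.
have al0 : 0 < m U by apply: hx0.
pose T h : set X := a (monoid.inv h) @^-1` U.
have oT h : open (T h).
  by apply: open_comp; [move=> z _; exact: act_cont|exact: Bo_open].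
have mT h : measurable (T h : set (borel_type X)) by apply: open_meas.
have mTh h : m (T h) = m U by rewrite /T m_inv //; exact: mBo.
have Tclose h z : T h z -> X0 z -> rho (a h x0) z <= e / 3.
  move=> Tz Xz; rewrite -(actKV h z) rho_act; apply: hr; first exact: X0inv.
  by apply: Bo_ball; exact: Tz.
pose UL (gs : seq G) : set X := foldr (fun h A => T h `|` A) set0 gs.
have mUL gs : measurable (UL gs : set (borel_type X)).
  by elim: gs => [|h gs ih] /=; [exact: measurable0|exact: measurableU].
pose PW := fix PW (gs : seq G) : Prop :=
  if gs is h :: gs' then T h `&` UL gs' = set0 /\ PW gs' else True.
have mULsz gs : PW gs -> m (UL gs) = (size gs)%:R * m U.
  elim: gs => [|h gs ih] /=; first by rewrite m0 mul0r.
  move=> [d pw]; rewrite m_add // ih // mTh.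
  by rewrite -nat1r mulrDl mul1r.
have szb gs : PW gs -> (size gs <= Num.truncn (m U)^-1)%N.
  move=> pw; rewrite truncn_ge_nat ?invr_ge0 ?m_ge0 //.
  rewrite -[(m U)^-1]mul1r ler_pdivlMr // -mULsz //; exact: m_le1.
pose P n := `[< exists gs, size gs = n /\ PW gs >].
have P0 : exists n, P n by exists 0%N; apply/asboolP; exists [::].
have Pb : forall n, P n -> (n <= Num.truncn (m U)^-1)%N.
  by move=> n /asboolP [gs [<- pw]]; exact: szb.
case: (ex_maxnP P0 Pb) => K /asboolP [gs [szK pw]] Kmax.
have meet h : T h `&` UL gs !=set0.
  apply/set0P/negP => /eqP hd.
  have : P K.+1 by apply/asboolP; exists (h :: gs); rewrite /= szK.
  by move/Kmax; rewrite ltnn.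
exists (map (fun g => a g x0) gs); split.
  by move=> q /mapP [g _ ->]; exact: X0inv.
move=> x Xx.
have [g xg] : exists g, T g x.
  have := X0t _ Xx; rewrite /transitive_points /= => cl.
  have : closure (Defs.orbit a x) x0 by rewrite cl.
  have Ux0 : nbhs x0 U by apply: open_nbhs_nbhs; split; [exact: Bo_open|apply: ball_Bo => //; apply: ballxx; rewrite divr_gt0].
  move=> /(_ _ Ux0) [z [[g _ <-] Uz]].
  exists (monoid.inv g); by rewrite /T monoid.invgK.
have [w [[Tw ULw] Xw]] : (T g `&` UL gs) `&` X0 !=set0.
  apply: X0d; first exact: meet.
  apply: openI; first exact: oT.
  by elim: (gs) => [|h hs ih] /=; [exact: open0|exact: openU].
have [gi gin Tgi] : exists2 gi, gi \in gs & T gi w.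
  elim: (gs) ULw => [//|h hs ih] /= [Tw'|]; first by exists h => //; rewrite inE eqxx.
  by move/ih => [gi gin Tgi]; exists gi => //; rewrite inE gin orbT.
exists (a gi x0); first by apply/mapP; exists gi.
have h1 := Tclose g x xg Xx.
have h2 := Tclose g w Tw Xw.
have h3 := Tclose gi w Tgi Xw.
apply: le_trans (rho_tri x (a g x0) _) _.
apply: le_trans (lerD (lexx _) (rho_tri (a g x0) w (a gi x0))) _.
rewrite [rho x _]rhoC [rho w _]rhoC; lra.
Qed.

End Proof7.
Local Open Scope classical_set_scope.
Local Open Scope ereal_scope.

Theorem mainTheorem7 (R : realType) (G : groupType) (X : pseudoPMetricType R)
  (a : G -> X -> X) (X0 : set X)
  (lam : measure (borel_type X) R) :
  hausdorff_space X -> compact [set: X] ->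
  homeo_action a -> top_transitive a ->
  X0 `<=` transitive_points a -> dense X0 -> G_invariant_set a X0 ->
  lam [set: borel_type X] = 1 ->
  (forall g (A : set (borel_type X)), measurable A -> lam (a g @^-1` A) = lam A) ->
  measurable (X0 : set (borel_type X)) -> lam X0 = 1 ->
  S0eq R a X0 `<=` \bigcap_(N in in_calN a) K0 lam X0 N.
Proof.
move=> hX cX act tt X0t X0d X0inv lamT laminv mX0 lamX0 p Sp N NN.
have [X1 [X2 _]] := Sp.
have h0 : rho R X lam N p.1 p.2 = 0%R.
  apply: (@main_generic R G X a X0 (rho R X lam N) (rhoxx R X lam N)
    (rhoC R X lam N) (rho_tri _ _ _ _ _ _ lamT NN)
    (tot_bdd _ _ _ _ _ _ _ cX act X0t X0d X0inv lamT laminv mX0 lamX0 NN)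
    (act1 _ _ _ _ act) (actM _ _ _ _ act) X0inv (rho_act _ _ _ _ _ _ act laminv NN)
    (rho_cont _ _ _ _ _ _ _ act X0t lamT laminv NN) (orbit_near _ _ _ _ _ X0t) p.1 X1 p Sp).
split => //; split => //.
rewrite /d_N; apply: etrans (lamE _ _ _ lamT (mSd _ _ _ _ _ NN p.1 p.2)) _.
exact: (congr1 EFin h0).
Qed.
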